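(* Let $G$ be a finite simple connected graph other than $K_2$, let $L$ be a subset of its leaves and let $L^c$ be the set of remaining leaves of $G$. Then \[ \rho\circ\lambda(G)=\rho\circ\lambda_L\circ\rho\circ\lambda_{L^c}(G). \]
   Context: A leaf is a vertex of degree one; two distinct vertices are siblings if they have the same closed neighborhood $N[v]=\{v\}\cup N(v)$. For a graph $G$ other than $K_2$ and a set $S$ of leaves of $G$, $\lambda_S(G)$ is the graph obtained by removing the vertices in $S$; $\lambda(G)$ is the graph obtained by removing all leaves of $G$. $\rho(G)$ is obtained from $G$ by contracting each maximal group of siblings to a single vertex. Equalities of graphs are understood up to the natural identification of vertices (i.e. as isomorphic graphs). *)

(* Defs.v *)
From mathcomp Require Import all_boot.

(* A (finite) graph: a finite vertex type with an adjacency relation.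
   Simplicity (symmetric, irreflexive) is imposed as a hypothesis. *)
Record graph : Type := Graph { gvert : finType; gadj : rel gvert }.

Set Implicit Arguments. Unset Strict Implicit. Unset Printing Implicit Defensive.

Definition simple_graph (G : graph) : Prop :=
  symmetric (gadj G) /\ irreflexive (gadj G).

Definition connected_graph (G : graph) : Prop :=
  0 < #|gvert G| /\ forall x y : gvert G, connect (gadj G) x y.

Definition is_K2 (G : graph) : Prop :=
  #|gvert G| = 2 /\ forall x y : gvert G, x != y -> gadj G x y.

Definition nbhd (G : graph) (v : gvert G) : {set gvert G} :=
  [set u | gadj G v u].

Definition cnbhd (G : graph) (v : gvert G) : {set gvert G} := v |: nbhd v.

Definition is_leaf (G : graph) (v : gvert G) : bool := #|nbhd v| == 1.

Definition leaves (G : graph) : {set gvert G} := [set v | is_leaf v].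

Definition siblings (G : graph) (u v : gvert G) : bool :=
  (u != v) && (cnbhd u == cnbhd v).

Definition induced (G : graph) (A : {set gvert G}) : graph :=
  @Graph {x : gvert G | x \in A} (fun x y => gadj G (val x) (val y)).

Definition lambdaS (G : graph) (S : {set gvert G}) : graph := induced (~: S).

Definition lambda (G : graph) : graph := lambdaS (leaves G).

Definition sib_class (G : graph) (v : gvert G) : {set gvert G} :=
  [set u | (u == v) || siblings u v].

Definition sib_classes (G : graph) : {set {set gvert G}} :=
  [set sib_class v | v : gvert G].

(* rho(G): contract each maximal group of siblings to a single vertex;
   vertices are the sibling classes, two distinct classes are adjacent
   iff some members are adjacent. *)
Definition rho (G : graph) : graph :=
  @Graph {C : {set gvert G} | C \in sib_classes G}
    (fun C D => (val C != val D) &&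
       [exists x in val C, exists y in val D, gadj G x y]).

Definition graph_iso (G H : graph) : Prop :=
  exists f : gvert G -> gvert H,
    bijective f /\ forall x y, gadj H (f x) (f y) = gadj G x y.

(* Vertices of rho(lambda_{L^c}(G)) that represent only vertices of L
   (the natural identification of L with a vertex set of that graph). *)
Definition L_in_rho_lambda (G : graph) (Lc L : {set gvert G})
  : {set gvert (rho (lambdaS Lc))} :=
  [set C : gvert (rho (lambdaS Lc)) |
     [forall x : gvert (lambdaS Lc), (x \in (val C : {set gvert (lambdaS Lc)})) ==> (val x \in L)]].

(* Main.v *)
Require Import Defs.
From mathcomp Require Import all_boot.

Lemma in_cnbhd (X : graph) (a z : gvert X) :
  (z \in cnbhd a) = (z == a) || gadj X a z.
Proof. by rewrite /cnbhd /nbhd !inE. Qed.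

Lemma cnbhd_self (X : graph) (a : gvert X) : a \in cnbhd a.
Proof. by rewrite in_cnbhd eqxx. Qed.

Lemma in_sib_class (X : graph) (u v : gvert X) :
  (u \in sib_class v) = (cnbhd u == cnbhd v).
Proof.
rewrite /sib_class /siblings inE.
by case: (eqVneq u v) => [->|ne]; rewrite ?eqxx.
Qed.

Lemma sib_class_eq (X : graph) (u v : gvert X) :
  (sib_class u == sib_class v) = (cnbhd u == cnbhd v).
Proof.
apply/eqP/eqP => h.
  by have := in_sib_class X u u; rewrite eqxx h in_sib_class => /eqP.
by apply/setP => w; rewrite !in_sib_class h.
Qed.

Lemma sib_classE {X : graph} (u v : gvert X) :
  sib_class u = sib_class v <-> cnbhd u = cnbhd v.
Proof.
split => [/eqP|e]; first by rewrite sib_class_eq => /eqP.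
by apply/eqP; rewrite sib_class_eq e.
Qed.

Lemma sib_classP (T : graph) (v : gvert T) : sib_class v \in sib_classes T.
Proof. by apply/imsetP; exists v. Qed.

Lemma rho_adj (X : graph) (a b : gvert X) : symmetric (gadj X) ->
  cnbhd a != cnbhd b ->
  [exists x in sib_class a, exists y in sib_class b, gadj X x y] = gadj X a b.
Proof.
move=> sym ne; apply/idP/idP.
  case/exists_inP => x; rewrite in_sib_class => /eqP xa /exists_inP [y].
  rewrite in_sib_class => /eqP yb xy.
  have: y \in cnbhd x by rewrite in_cnbhd xy orbT.
  rewrite xa in_cnbhd => /orP [/eqP ya | ay].
    by move: ne; rewrite -yb ya eqxx.
  have: a \in cnbhd y by rewrite in_cnbhd sym ay orbT.
  rewrite yb in_cnbhd => /orP [/eqP ab | ba]; last by rewrite sym.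
  by move: ne; rewrite ab eqxx.
move=> ab; apply/exists_inP; exists a; first by rewrite in_sib_class.
by apply/exists_inP; exists b; rewrite ?in_sib_class.
Qed.

Lemma rho_iso (X Y : graph) (f : gvert X -> gvert Y) :
  symmetric (gadj X) -> (forall y, exists x, f x = y) ->
  (forall a b, f a = f b -> cnbhd a = cnbhd b) ->
  (forall a b, f a != f b -> gadj Y (f a) (f b) = gadj X a b) ->
  graph_iso (rho X) (rho Y).
Proof.
move=> symX fsurj f1 f2.
have symY : symmetric (gadj Y).
  move=> y1 y2; case: (fsurj y1) => a <-; case: (fsurj y2) => b <-.
  case: (eqVneq (f a) (f b)) => [->|ne]; first by [].
  by rewrite f2 // f2 1?eq_sym // symX.
have memf a z : (z \in cnbhd a) = (f z \in cnbhd (f a)).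
  rewrite !in_cnbhd; case: (eqVneq (f z) (f a)) => [e|ne] /=.
    by rewrite -in_cnbhd -(f1 z a e) cnbhd_self.
  have za : z != a by apply: contraNneq ne => ->.
  by rewrite (negbTE za) /= f2 // eq_sym.
have cnE a b : (cnbhd (f a) == cnbhd (f b)) = (cnbhd a == cnbhd b).
  apply/eqP/eqP => h.
    by apply/setP => z; rewrite memf h -memf.
  by apply/setP => w; case: (fsurj w) => z <-; rewrite -!memf h.
case: (set_0Vmem [set: gvert X]) => [X0 | [x0 _]].
  have noX : gvert X -> False by move=> x; have := in_setT x; rewrite X0 inE.
  have noRX : gvert (rho X) -> False by case=> C /imsetP [v _ _]; exact: noX v.
  have noRY : gvert (rho Y) -> False.
    by case=> D /imsetP [y _ _]; case: (fsurj y) => x _; exact: noX x.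
  exists (fun C => match noRX C with end); split.
    exists (fun D => match noRY D with end).
      by move=> C; case: (noRX C).
    by move=> D; case: (noRY D).
  by move=> C; case: (noRX C).
pose cX (v : gvert X) : gvert (rho X) := exist _ (sib_class v) (sib_classP X v).
pose cY (v : gvert Y) : gvert (rho Y) := exist _ (sib_class v) (sib_classP Y v).
pose rep (C : gvert (rho X)) := odflt x0 [pick v | sib_class v == val C].
pose rep' (D : gvert (rho Y)) := odflt x0 [pick v | sib_class (f v) == val D].
have repK C : cX (rep C) = C.
  case: C => C HC; rewrite /rep /=; case: pickP => [v /eqP e|none] /=.
    by apply: val_inj.
  by have [v _ e] := imsetP HC; have := none v; rewrite /= -e eqxx.
have rep'K D : cY (f (rep' D)) = D.
  case: D => D HD; rewrite /rep' /=; case: pickP => [v /eqP e|none] /=.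
    by apply: val_inj.
  have [y _ e] := imsetP HD; case: (fsurj y) => v ev.
  by have := none v; rewrite /= ev -e eqxx.
have cXE a b : cX a = cX b <-> cnbhd a = cnbhd b.
  split; first by move/(congr1 val) => /= /eqP; rewrite sib_class_eq => /eqP.
  by move=> h; apply: val_inj => /=; apply/eqP; rewrite sib_class_eq h.
have cYE a b : cY a = cY b <-> cnbhd a = cnbhd b.
  split; first by move/(congr1 val) => /= /eqP; rewrite sib_class_eq => /eqP.
  by move=> h; apply: val_inj => /=; apply/eqP; rewrite sib_class_eq h.
have adjE a b : gadj (rho Y) (cY (f a)) (cY (f b)) = gadj (rho X) (cX a) (cX b).
  rewrite /= !sib_class_eq cnE.
  case: (eqVneq (cnbhd a) (cnbhd b)) => [//|ne] /=.
  rewrite rho_adj ?cnE // rho_adj // f2 //.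
  by apply/eqP => e; move: ne; rewrite (f1 _ _ e) eqxx.
exists (fun C => cY (f (rep C))); split.
  exists (fun D => cX (rep' D)).
    move=> C /=; rewrite -[RHS]repK; apply/cXE.
    have /cYE/eqP := rep'K (cY (f (rep C))).
    by rewrite cnE => /eqP.
  move=> D /=; rewrite -[RHS]rep'K; apply/cYE.
  have /cXE/eqP := repK (cX (rep' D)).
  by rewrite -cnE => /eqP.
by move=> C D; rewrite adjE !repK.
Qed.

Lemma sig_eq (T : Type) (P : pred T) (x y : T) (px : P x) (py : P y) :
  x = y -> exist (fun z => is_true (P z)) x px = exist _ y py.
Proof. by move=> e; subst; congr exist; apply: bool_irrelevance. Qed.

Lemma induced_sym (G : graph) (A : {set gvert G}) :
  symmetric (gadj G) -> symmetric (gadj (induced A)).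
Proof. by move=> s x y; exact: s. Qed.

Lemma toH_proof {G : graph} (L : {set gvert G}) (a : gvert (lambda G)) :
  sval a \in ~: (leaves G :\: L).
Proof. by case: a => v /=; rewrite !inE => /negbTE ->; rewrite andbF. Qed.

Definition toH {G : graph} (L : {set gvert G}) (a : gvert (lambda G)) :
  gvert (lambdaS (leaves G :\: L)) := exist _ (sval a) (toH_proof L a).

Definition clsH {G : graph} (L : {set gvert G}) (a : gvert (lambda G)) :
  gvert (rho (lambdaS (leaves G :\: L))) :=
  exist _ (sib_class (toH L a)) (sib_classP _ (toH L a)).

Lemma fY_proof {G : graph} (L : {set gvert G}) (HL : L \subset leaves G)
  (a : gvert (lambda G)) :
  clsH L a \in ~: L_in_rho_lambda (leaves G :\: L) L.
Proof.
rewrite inE /L_in_rho_lambda inE negb_forall; apply/existsP; exists (toH L a).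
rewrite /= negb_imply; apply/andP; split.
  by rewrite /sib_class inE eqxx.
move: (svalP a); rewrite inE => nl; apply/negP => vL.
by move: nl; rewrite (subsetP HL _ vL).
Qed.

Definition fY {G : graph} (L : {set gvert G}) (HL : L \subset leaves G)
  (a : gvert (lambda G)) :
  gvert (lambdaS (L_in_rho_lambda (leaves G :\: L) L)) :=
  exist _ (clsH L a) (fY_proof L HL a).

Theorem lemma5p2 (G : graph) (L : {set gvert G}) :
  simple_graph G -> connected_graph G -> ~ is_K2 G ->
  L \subset leaves G ->
  graph_iso (rho (lambda G))
    (rho (lambdaS (L_in_rho_lambda (leaves G :\: L) L))).
Proof.
move=> [symG _] _ _ HL.
have symH : symmetric (gadj (lambdaS (leaves G :\: L))) by exact: induced_sym.
have toHeq (z a : gvert (lambda G)) : (toH L z == toH L a) = (z == a) by [].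
apply: (@rho_iso _ _ (fY L HL)).
- exact: induced_sym.
- case=> [[S HS] HSL].
  have [h _ eS] := imsetP HS.
  have H1 := HSL; rewrite inE /L_in_rho_lambda inE negb_forall in H1.
  case/existsP: H1 => x.
  rewrite negb_imply => /andP [xS xL].
  have Hx : sval x \in ~: leaves G.
    by move: (svalP x); rewrite !inE xL.
  exists (exist _ (sval x) Hx).
  apply: sig_eq; apply: sig_eq => /=.
  have -> : toH L (exist _ (sval x) Hx) = x.
    by move: Hx; case: x {xS xL} => y py Hy; apply: sig_eq.
  move: xS => /=; rewrite eS => xS.
  have := in_sib_class (lambdaS (leaves G :\: L)) x h; rewrite xS => /esym/eqP.
  by move=> e; apply/eqP; have := sib_class_eq (lambdaS (leaves G :\: L)) x h; rewrite e eqxx => ->.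
- move=> a b /(congr1 sval) /(congr1 sval) /= e0.
  have e := iffLR (@sib_classE (lambdaS (leaves G :\: L)) _ _) e0.
  apply/setP => z; have : (toH L z \in cnbhd (toH L a)) = (toH L z \in cnbhd (toH L b)) by rewrite e.
  by rewrite /cnbhd /nbhd !inE /=.
- move=> a b ne /=.
  have ne' : cnbhd (toH L a) <> cnbhd (toH L b).
    move=> e; move/eqP: ne; apply; apply: sig_eq; apply: sig_eq.
    by apply/sib_classE.
  have ne'' : sib_class (toH L a) <> sib_class (toH L b) by move/sib_classE.
  have := ne''; move/eqP/negbTE => -> /=.
  exact: (@rho_adj (lambdaS (leaves G :\: L)) (toH L a) (toH L b) symH (introN eqP ne')).
Qed.
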